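(* Let $\sigma$ be a strongly erasing $k$-block substitution with $w_\epsilon\ne1^k$ that satisfies the optimality condition. Then for every $w\in\{0,1\}^*$ there is $h\in\mathbb N$ such that $f_\sigma^h([w])=\mathbb I$. Consequently $f_\sigma$ is topologically mixing: for all nonempty open sets $A,B\subseteq\mathbb I$ there is $N$ such that $f_\sigma^n(A)\cap B\ne\emptyset$ for all $n\ge N$.
   Context: Notation: $\mathbb I=[0,1]$. $\{0,1\}^*$ and $\{0,1\}^\omega$ denote finite and infinite binary words, and $\epsilon$ is the empty word. For a word $w$, set $0.w=\sum_iw_i2^{-i}$. For $x\in(0,1]$, $\widetilde x$ is the unique infinite binary expansion of $x$ not ending in $0^\infty$. For $w\in\{0,1\}^*$, the cylinder is $[w]=\{x\in\mathbb I:x=0.wv\text{ for some finite or infinite word }v\}$. Fix $k\ge2$. An erasing $k$-block substitution is a map $\sigma:\{0,1\}^k\to\{0,1\}^*$ with exactly one block $w_\epsilon$ such that $\sigma(w_\epsilon)=\epsilon$. It acts blockwise on infinite words and on finite words of length a multiple of $k$. $k$-rounding: a $k$-rounding of $w$ is any word $wv$ whose length is the least multiple of $k$ that is $\ge|w|$; if $|w|$ is a multiple of $k$, the only $k$-rounding of $w$ is $w$. $\sigma$ is strongly erasing if for every $w\in\{0,1\}^*$ there exist $n\in\mathbb N$ and words $r_0,\dots,r_{n-1}$ such that $r_0$ is a $k$-rounding of $w$, $r_j$ is a $k$-rounding of $\sigma(r_{j-1})$ for $1\le j\le n-1$, and $\sigma(r_{n-1})=\epsilon$. The map $f_\sigma:\mathbb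 I\to\mathbb I$ is defined by $f_\sigma(x)=0.\sigma(\widetilde x)$ if $x\in(0,1]$ and $\widetilde x\neq w_\epsilon^\infty$, and $f_\sigma(x)=0$ otherwise. Optimality condition: every $w\in\{0,1\}^\omega$ can be written as $w=\prod_{i\ge1}\sigma(b_i)$ with blocks $b_i\in\{0,1\}^k$ satisfying $\sigma(b_i)\ne\epsilon$. *)

(* Defs.v *)
From Stdlib Require Import Reals Lra Lia List Arith ClassicalEpsilon.
From Coquelicot Require Import Coquelicot.
Import ListNotations.
Open Scope R_scope.

(* Finite binary words: list bool;  infinite binary words: nat -> bool,
   where index i stands for the letter w_{i+1}. *)

Fixpoint val_fin_from (n : nat) (w : list bool) : R :=
  match w with
  | [] => 0
  | b :: w' => (if b then (/2) ^ (S n) else 0) + val_fin_from (S n) w'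
  end.
Definition val_fin (w : list bool) : R := val_fin_from 0 w.

Definition val_inf (w : nat -> bool) : R :=
  Series (fun i => if w i then (/2) ^ (S i) else 0).

Definition app_inf (u : list bool) (v : nat -> bool) : nat -> bool :=
  fun i => if Nat.ltb i (length u) then nth i u false else v (i - length u)%nat.

Definition is_tilde_expansion (x : R) (w : nat -> bool) : Prop :=
  x = val_inf w /\ (forall N : nat, exists i : nat, (N <= i)%nat /\ w i = true).

(* x~ : the (unique, for x in (0,1]) infinite binary expansion of x not
   ending in 0^oo; chosen by Hilbert's epsilon. *)
Definition tilde (x : R) : nat -> bool :=
  epsilon (inhabits (fun _ => true)) (is_tilde_expansion x).

Definition block (k : nat) (w : nat -> bool) (j : nat) : list bool :=
  map (fun t => w (k * j + t)%nat) (seq 0 k).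

Definition erasing (k : nat) (sigma : list bool -> list bool) (weps : list bool) : Prop :=
  length weps = k /\ sigma weps = [] /\
  (forall b, length b = k -> sigma b = [] -> b = weps).

Fixpoint chunks_aux (fuel k : nat) (w : list bool) : list (list bool) :=
  match fuel with
  | O => []
  | S f => match w with
           | [] => []
           | _ => firstn k w :: chunks_aux f k (skipn k w)
           end
  end.
Definition chunks (k : nat) (w : list bool) := chunks_aux (length w) k w.

(* blockwise action on finite words (of length a multiple of k) *)
Definition sigma_fin (k : nat) (sigma : list bool -> list bool) (w : list bool) : list bool :=
  concat (map sigma (chunks k w)).

Definition k_rounding (k : nat) (w r : list bool) : Prop :=
  (exists v, r = w ++ v) /\ Nat.divide k (length r) /\ (length w <= length r)%nat /\
  (forall m, Nat.divide k m -> (length w <= m)%nat -> (length r <= m)%nat).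

Definition strongly_erasing (k : nat) (sigma : list bool -> list bool) : Prop :=
  forall w : list bool, exists (n : nat) (r : nat -> list bool),
    (1 <= n)%nat /\ k_rounding k w (r 0%nat) /\
    (forall j, (1 <= j <= n - 1)%nat -> k_rounding k (sigma_fin k sigma (r (j - 1)%nat)) (r j)) /\
    sigma_fin k sigma (r (n - 1)%nat) = [].

Fixpoint pref_len (sigma : list bool -> list bool) (b : nat -> list bool) (j : nat) : nat :=
  match j with
  | O => O
  | S j' => (pref_len sigma b j' + length (sigma (b j')))%nat
  end.

Definition val_concat (sigma : list bool -> list bool) (b : nat -> list bool) : R :=
  Series (fun j => (/2) ^ (pref_len sigma b j) * val_fin (sigma (b j))).

Definition periodic (k : nat) (u : list bool) : nat -> bool :=
  fun i => nth (i mod k) u false.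

Definition f_sigma (k : nat) (sigma : list bool -> list bool) (weps : list bool) (x : R) : R :=
  if excluded_middle_informative (0 < x <= 1 /\ tilde x <> periodic k weps)
  then val_concat sigma (block k (tilde x))
  else 0.

Definition optimal (k : nat) (sigma : list bool -> list bool) : Prop :=
  forall w : nat -> bool, exists b : nat -> list bool,
    (forall i, length (b i) = k /\ sigma (b i) <> []) /\
    (forall j m, (m < length (sigma (b j)))%nat ->
       w (pref_len sigma b j + m)%nat = nth m (sigma (b j)) false).

Definition cylinder (w : list bool) (x : R) : Prop :=
  0 <= x <= 1 /\
  ((exists v : list bool, x = val_fin (w ++ v)) \/
   (exists v : nat -> bool, x = val_inf (app_inf w v))).

Definition unit_interval (x : R) : Prop := 0 <= x <= 1.

Fixpoint iter (n : nat) (f : R -> R) (x : R) : R :=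
  match n with O => x | S n' => f (iter n' f x) end.

Definition image_iter (n : nat) (f : R -> R) (A : R -> Prop) : R -> Prop :=
  fun y => exists x, A x /\ iter n f x = y.

Definition open_in_I (A : R -> Prop) : Prop :=
  (forall x, A x -> unit_interval x) /\
  (forall x, A x -> exists eps, 0 < eps /\
     forall y, unit_interval y -> Rabs (y - x) < eps -> A y).

Definition topologically_mixing (f : R -> R) : Prop :=
  forall A B : R -> Prop, open_in_I A -> open_in_I B ->
    (exists a, A a) -> (exists b, B b) ->
    exists N : nat, forall n : nat, (N <= n)%nat ->
      exists x, A x /\ B (iter n f x).

(* Main.v *)
Require Import Defs.
From Stdlib Require Import Reals Lra Lia List Arith ClassicalEpsilon FunctionalExtensionality.
From Coquelicot Require Import Coquelicot.
Import ListNotations.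
Open Scope R_scope.

Fixpoint psum (a : nat -> R) (n : nat) : R :=
  match n with O => 0 | S n' => psum a n' + a n' end.

Lemma sum_n_psum a n : sum_n a n = psum a (S n).
Proof.
  induction n.
  - rewrite sum_O. simpl. apply eq_sym, Rplus_0_l.
  - rewrite sum_Sn, IHn. simpl. unfold plus; simpl. change (psum a n + a n + a (S n) = psum a n + a n + a (S n)). reflexivity.
Qed.

Lemma psum_mono a n m : (forall i, 0 <= a i) -> (n <= m)%nat -> psum a n <= psum a m.
Proof.
  intros Ha H. induction H. lra. simpl. specialize (Ha m). lra.
Qed.

Lemma nonneg_series a M : (forall n, 0 <= a n) -> (forall n, psum a n <= M) ->
  ex_series a /\ (forall n, psum a n <= Series a) /\ Series a <= M.
Proof.
  intros Ha HM.
  assert (Hf : ex_finite_lim_seq (sum_n a)).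
  { apply ex_finite_lim_seq_incr with M.
    - intros n. rewrite !sum_n_psum. simpl. specialize (Ha (S n)). lra.
    - intros n. rewrite sum_n_psum. apply HM. }
  destruct Hf as [l Hl].
  assert (HS : Series a = l).
  { unfold Series. rewrite (is_lim_seq_unique _ _ Hl). reflexivity. }
  rewrite HS. split; [exists l; exact Hl|]. split.
  - intros n.
    apply (is_lim_seq_incr_n _ n) in Hl.
    assert (H := is_lim_seq_le (fun _ => psum a n) (fun m => sum_n a (m + n)) (psum a n) l).
    simpl in H. apply H; [|apply is_lim_seq_const|exact Hl].
    intros m. rewrite sum_n_psum. apply psum_mono; [exact Ha|lia].
  - assert (H := is_lim_seq_le (sum_n a) (fun _ => M) l M).
    simpl in H. apply H; [|exact Hl|apply is_lim_seq_const].
    intros m. rewrite sum_n_psum. apply HM.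
Qed.

Lemma half_pow_small eps : 0 < eps -> exists L, (/2)^L < eps.
Proof.
  intros He. destruct (pow_lt_1_zero (/2)) with eps as [N HN].
  - rewrite Rabs_pos_eq; lra.
  - exact He.
  - exists N. specialize (HN N (le_n _)). rewrite Rabs_pos_eq in HN. exact HN.
    apply pow_le; lra.
Qed.

Lemma le_half_pow z : (forall L, z <= (/2)^L) -> z <= 0.
Proof.
  intros H. destruct (Rle_dec z 0) as [h|h]; [exact h|].
  destruct (half_pow_small z) as [L HL]. lra. specialize (H L). lra.
Qed.

Lemma half_pow_pos n : 0 < (/2)^n.
Proof. apply pow_lt; lra. Qed.

Lemma half_pow_anti n m : (n <= m)%nat -> (/2)^m <= (/2)^n.
Proof.
  intros H. induction H. lra. simpl. assert (0 < (/2)^m) by apply half_pow_pos. lra.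
Qed.

Lemma vff_S m u : val_fin_from (S m) u = /2 * val_fin_from m u.
Proof.
  revert m. induction u as [|b u IH]; intros m; simpl. ring.
  rewrite IH. destruct b; simpl; ring.
Qed.

Lemma vff_pow m u : val_fin_from m u = (/2)^m * val_fin u.
Proof.
  induction m. simpl. unfold val_fin. ring. rewrite vff_S, IHm. simpl. ring.
Qed.

Lemma vff_app m u v : val_fin_from m (u ++ v) = val_fin_from m u + val_fin_from (m + length u) v.
Proof.
  revert m. induction u as [|b u IH]; intros m; simpl.
  rewrite Nat.add_0_r. ring. rewrite IH. replace (S m + length u)%nat with (m + S (length u))%nat by lia. ring.
Qed.

Lemma val_fin_app u v : val_fin (u ++ v) = val_fin u + (/2)^(length u) * val_fin v.
Proof. unfold val_fin. rewrite vff_app. simpl. rewrite (vff_pow (length u)). reflexivity. Qed.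

Lemma val_fin_cons b u : val_fin (b :: u) = (if b then /2 else 0) + /2 * val_fin u.
Proof. unfold val_fin. simpl. rewrite vff_S. destruct b; simpl; ring. Qed.

Lemma val_fin_bounds u : 0 <= val_fin u <= 1 - (/2)^(length u).
Proof.
  induction u as [|b u IH]. unfold val_fin; simpl; lra.
  rewrite val_fin_cons. simpl. destruct b; lra.
Qed.

Definition aW (W : nat -> bool) (i : nat) : R := if W i then (/2)^(S i) else 0.

Lemma aW_pos W i : 0 <= aW W i.
Proof. unfold aW. destruct (W i). left; apply half_pow_pos. lra. Qed.

Lemma vff_seq W L s : val_fin_from s (map W (seq s L)) + psum (aW W) s = psum (aW W) (s + L).
Proof.
  revert s. induction L; intros s; simpl. rewrite Nat.add_0_r. ring.
  replace (s + S L)%nat with (S s + L)%nat by lia. rewrite <- IHL. simpl. unfold aW. destruct (W s); simpl; ring.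
Qed.

Lemma val_fin_pre W L : val_fin (map W (seq 0 L)) = psum (aW W) L.
Proof. unfold val_fin. pose proof (vff_seq W L 0) as H. simpl in H. lra. Qed.

Lemma val_inf_props W : ex_series (aW W) /\ (forall n, psum (aW W) n <= val_inf W) /\ 0 <= val_inf W <= 1.
Proof.
  destruct (nonneg_series (aW W) 1) as [H1 [H2 H3]].
  - apply aW_pos.
  - intros n. rewrite <- val_fin_pre. pose proof (val_fin_bounds (map W (seq 0 n))).
    pose proof (half_pow_pos (length (map W (seq 0 n)))). lra.
  - unfold val_inf. fold (aW W). split; [exact H1|]. split; [exact H2|].
    split; [|exact H3]. specialize (H2 O). simpl in H2. exact H2.
Qed.

Lemma val_inf_cons W : val_inf W = (if W O then /2 else 0) + /2 * val_inf (fun i => W (S i)).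
Proof.
  destruct (val_inf_props W) as [Hex _].
  unfold val_inf. fold (aW W). fold (aW (fun i => W (S i))).
  rewrite Series_incr_1 by exact Hex. rewrite <- Series_scal_l.
  f_equal. unfold aW. simpl. destruct (W O); simpl; ring.
  apply Series_ext. intros n. unfold aW. destruct (W (S n)); simpl; ring.
Qed.

Lemma app_inf_cons b u v : forall i, app_inf (b :: u) v i =
  match i with O => b | S i' => app_inf u v i' end.
Proof.
  intros [|i]; unfold app_inf; simpl. reflexivity.
  reflexivity.
Qed.

Lemma val_inf_ext W1 W2 : (forall i, W1 i = W2 i) -> val_inf W1 = val_inf W2.
Proof. intros H. unfold val_inf. apply Series_ext. intros n. rewrite H. reflexivity. Qed.

Lemma val_inf_app u v : val_inf (app_inf u v) = val_fin u + (/2)^(length u) * val_inf v.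
Proof.
  induction u as [|b u IH].
  - rewrite (val_inf_ext _ v). unfold val_fin; simpl. ring.
    intros i. unfold app_inf. simpl. rewrite Nat.sub_0_r. reflexivity.
  - rewrite val_inf_cons, val_fin_cons.
    rewrite (val_inf_ext (fun i => app_inf (b :: u) v (S i)) (app_inf u v)).
    rewrite IH. rewrite (app_inf_cons b u v O). simpl. ring.
    intros i. apply app_inf_cons.
Qed.
Lemma pre_shift T L i : app_inf (map T (seq 0 L)) (fun i => T (L + i)%nat) i = T i.
Proof.
  unfold app_inf. rewrite length_map, length_seq.
  destruct (Nat.ltb_spec i L).
  - rewrite (nth_indep _ false (T 0%nat)) by (rewrite length_map, length_seq; lia).
    rewrite map_nth, seq_nth by lia. reflexivity.
  - f_equal. lia.
Qed.

Lemma val_inf_split T L : val_inf T = psum (aW T) L + (/2)^L * val_inf (fun i => T (L + i)%nat).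
Proof.
  rewrite <- (val_inf_ext _ _ (pre_shift T L)). rewrite val_inf_app.
  rewrite val_fin_pre, length_map, length_seq. reflexivity.
Qed.

Definition ones (W : nat -> bool) := forall N, exists i, (N <= i)%nat /\ W i = true.

Lemma val_pos i : forall W, W i = true -> 0 < val_inf W.
Proof.
  induction i; intros W H; rewrite val_inf_cons;
  destruct (val_inf_props (fun i => W (S i))) as [_ [_ Hb]].
  - rewrite H. lra.
  - specialize (IHi (fun j => W (S j)) H). destruct (W O); lra.
Qed.

Lemma ones_tail W : ones W -> ones (fun i => W (S i)).
Proof.
  intros H N. destruct (H (S N)) as [i [Hi Hw]]. destruct i. lia.
  exists i. split. lia. exact Hw.
Qed.

Lemma uniq_exp i : forall W1 W2, ones W1 -> ones W2 -> val_inf W1 = val_inf W2 -> W1 i = W2 i.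
Proof.
  assert (Hhead : forall W1 W2, ones W1 -> ones W2 -> val_inf W1 = val_inf W2 -> W1 O = W2 O).
  { intros W1 W2 H1 H2 He.
    assert (forall A B, ones A -> A O = true -> B O = false -> val_inf A = val_inf B -> False) as K.
    { intros A B HA Ha Hb HE. rewrite (val_inf_cons A), (val_inf_cons B), Ha, Hb in HE.
      destruct (ones_tail _ HA O) as [j [_ Hj]].
      pose proof (val_pos j (fun i => A (S i)) Hj).
      destruct (val_inf_props (fun i => B (S i))) as [_ [_ Hb']]. lra. }
    destruct (W1 O) eqn:E1, (W2 O) eqn:E2; auto.
    - exfalso. exact (K W1 W2 H1 E1 E2 He).
    - exfalso. exact (K W2 W1 H2 E2 E1 (eq_sym He)). }
  induction i; intros W1 W2 H1 H2 He.
  - apply Hhead; auto.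
  - apply (IHi (fun j => W1 (S j)) (fun j => W2 (S j))); try apply ones_tail; auto.
    pose proof (Hhead _ _ H1 H2 He) as H0.
    rewrite val_inf_cons, (val_inf_cons W2), H0 in He. lra.
Qed.

Lemma tilde_val W : ones W -> tilde (val_inf W) = W.
Proof.
  intros H. unfold tilde.
  destruct (epsilon_spec (inhabits (fun _ => true)) (is_tilde_expansion (val_inf W))) as [Hv Ho].
  - exists W. split; [reflexivity|exact H].
  - apply functional_extensionality. intros i. apply uniq_exp; auto.
Qed.

Fixpoint gp (y : R) (n : nat) : R :=
  match n with
  | O => 0
  | S n' => if Rle_dec (gp y n' + (/2)^(S n')) y then gp y n' + (/2)^(S n') else gp y n'
  end.

Definition gd (y : R) (i : nat) : bool :=
  if Rle_dec (gp y i + (/2)^(S i)) y then true else false.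

Lemma gp_psum y n : psum (aW (gd y)) n = gp y n.
Proof.
  induction n; simpl. reflexivity. rewrite IHn. unfold aW, gd.
  change ((/2)^(S n)) with (/2 * (/2)^n). destruct (Rle_dec (gp y n + /2 * (/2)^n) y); simpl; ring.
Qed.

Lemma gp_inv y n : 0 <= y <= 1 -> gp y n <= y <= gp y n + (/2)^n.
Proof.
  intros Hy. induction n; simpl. lra.
  destruct (Rle_dec (gp y n + / 2 * (/ 2) ^ n) y); lra.
Qed.

Lemma expansion y : 0 <= y <= 1 -> exists U, val_inf U = y.
Proof.
  intros Hy. exists (gd y).
  assert (forall L, val_inf (gd y) - y <= (/2)^L /\ y - val_inf (gd y) <= (/2)^L).
  { intros L. destruct (val_inf_props (gd y)) as [_ [Hp _]].
    specialize (Hp L). rewrite gp_psum in Hp.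
    pose proof (val_inf_split (gd y) L) as Hs. rewrite gp_psum in Hs.
    destruct (val_inf_props (fun i => gd y (L + i)%nat)) as [_ [_ Hb]].
    pose proof (gp_inv y L Hy). pose proof (half_pow_pos L).
    assert ((/2)^L * val_inf (fun i => gd y (L + i)%nat) <= (/2)^L).
    { rewrite <- (Rmult_1_r ((/2)^L)) at 2. apply Rmult_le_compat_l; lra. }
    split; lra. }
  assert (val_inf (gd y) - y <= 0) by (apply le_half_pow; intros L; apply H).
  assert (y - val_inf (gd y) <= 0) by (apply le_half_pow; intros L; apply H).
  lra.
Qed.

Definition cterm (sigma : list bool -> list bool) (b : nat -> list bool) (j : nat) : R :=
  (/2)^(pref_len sigma b j) * val_fin (sigma (b j)).

Definition Xw (sigma : list bool -> list bool) (b : nat -> list bool) (J : nat) : list bool :=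
  concat (map (fun j => sigma (b j)) (seq 0 J)).

Lemma len_Xw sigma b J : length (Xw sigma b J) = pref_len sigma b J.
Proof.
  induction J. reflexivity. unfold Xw in *. rewrite seq_S, map_app, concat_app, length_app, IHJ.
  simpl. rewrite app_nil_r. reflexivity.
Qed.

Lemma psum_cterm sigma b J : psum (cterm sigma b) J = val_fin (Xw sigma b J).
Proof.
  induction J. reflexivity. simpl. rewrite IHJ. unfold Xw. rewrite seq_S, map_app, concat_app.
  simpl. rewrite app_nil_r, val_fin_app. fold (Xw sigma b J). rewrite len_Xw. reflexivity.
Qed.

Lemma cterm_pos sigma b j : 0 <= cterm sigma b j.
Proof.
  unfold cterm. apply Rmult_le_pos. left; apply half_pow_pos. apply val_fin_bounds.
Qed.

Lemma val_concat_bounds sigma b : 0 <= val_concat sigma b <= 1.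
Proof.
  destruct (nonneg_series (cterm sigma b) 1) as [_ [H1 H2]].
  - apply cterm_pos.
  - intros n. rewrite psum_cterm. pose proof (val_fin_bounds (Xw sigma b n)).
    pose proof (half_pow_pos (length (Xw sigma b n))). lra.
  - unfold val_concat. fold (cterm sigma b). specialize (H1 O). simpl in H1. lra.
Qed.

Definition Rel (sigma : list bool -> list bool) (b : nat -> list bool) (T : nat -> bool) : Prop :=
  (forall j m, (m < length (sigma (b j)))%nat ->
     T (pref_len sigma b j + m)%nat = nth m (sigma (b j)) false) /\
  (forall N, exists j, (N <= pref_len sigma b j)%nat).

Lemma map_seq_nth (T : nat -> bool) P l :
  (forall m, (m < length l)%nat -> T (P + m)%nat = nth m l false) ->
  map T (seq P (length l)) = l.
Proof.
  intros H. apply nth_ext with false false. rewrite length_map, length_seq. reflexivity.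
  intros n Hn. rewrite length_map, length_seq in Hn.
  rewrite (nth_indep _ false (T 0%nat)) by (rewrite length_map, length_seq; lia).
  rewrite map_nth, seq_nth by lia. apply H. exact Hn.
Qed.

Lemma Xw_match sigma b T : Rel sigma b T -> forall J, Xw sigma b J = map T (seq 0 (pref_len sigma b J)).
Proof.
  intros [Hm _] J. induction J. reflexivity.
  unfold Xw in *. rewrite seq_S, map_app, concat_app, IHJ. simpl pref_len.
  rewrite seq_app, map_app. simpl. rewrite app_nil_r. f_equal.
  symmetry. apply map_seq_nth. intros m Hm'. apply Hm. exact Hm'.
Qed.

Lemma pref_mono sigma b j j' : (j <= j')%nat -> (pref_len sigma b j <= pref_len sigma b j')%nat.
Proof. intros H. induction H. lia. simpl. lia. Qed.

Lemma L_concat sigma b T : Rel sigma b T -> val_concat sigma b = val_inf T.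
Proof.
  intros HR.
  assert (Hps : forall J, psum (cterm sigma b) J = psum (aW T) (pref_len sigma b J)).
  { intros J. rewrite psum_cterm, (Xw_match _ _ _ HR), val_fin_pre. reflexivity. }
  destruct (val_inf_props T) as [_ [HT _]].
  destruct (nonneg_series (cterm sigma b) (val_inf T)) as [_ [H1 H2]].
  - apply cterm_pos.
  - intros n. rewrite Hps. apply HT.
  - unfold val_concat. fold (cterm sigma b).
    assert (val_inf T - Series (cterm sigma b) <= 0); [|lra].
    apply le_half_pow. intros L.
    destruct (proj2 HR L) as [J HJ].
    pose proof (val_inf_split T L) as Hs.
    destruct (val_inf_props (fun i => T (L + i)%nat)) as [_ [_ Hb]].
    pose proof (half_pow_pos L).
    assert ((/2)^L * val_inf (fun i => T (L + i)%nat) <= (/2)^L).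
    { rewrite <- (Rmult_1_r ((/2)^L)) at 2. apply Rmult_le_compat_l; lra. }
    pose proof (psum_mono (aW T) _ _ (aW_pos T) HJ).
    specialize (H1 J). rewrite Hps in H1. lra.
Qed.

Lemma pref_len_S sigma b j :
  pref_len sigma b (S j) = (length (sigma (b O)) + pref_len sigma (fun i => b (S i)) j)%nat.
Proof. induction j. simpl. lia. simpl in *. rewrite IHj. lia. Qed.

Lemma pref_len_ext sigma b1 b2 j : (forall i, b1 i = b2 i) -> pref_len sigma b1 j = pref_len sigma b2 j.
Proof. intros H. induction j. reflexivity. simpl. rewrite IHj, H. reflexivity. Qed.

Definition bcons (a : list bool) (b : nat -> list bool) : nat -> list bool :=
  fun j => match j with O => a | S j' => b j' end.

Lemma Rel_cons sigma a b T : Rel sigma b T -> Rel sigma (bcons a b) (app_inf (sigma a) T).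
Proof.
  intros [Hm Hu]. split.
  - intros [|j] m Hlt.
    + simpl. unfold app_inf. simpl in Hlt. destruct (Nat.ltb_spec m (length (sigma a))). reflexivity. lia.
    + rewrite pref_len_S. simpl (bcons a b 0). simpl (bcons a b (S j)) in *.
      change (fun i => bcons a b (S i)) with b.
      unfold app_inf. destruct (Nat.ltb_spec (length (sigma a) + pref_len sigma b j + m) (length (sigma a))).
      lia. rewrite <- Hm by exact Hlt. f_equal. lia.
  - intros N. destruct (Hu N) as [j Hj]. exists (S j). rewrite pref_len_S.
    change (fun i => bcons a b (S i)) with b. simpl (bcons a b 0). lia.
Qed.

Lemma nth_seq_map (l : list bool) k : length l = k -> map (fun t => nth t l false) (seq 0 k) = l.
Proof.
  intros H. apply nth_ext with false false. rewrite length_map, length_seq. auto.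
  intros n Hn. rewrite length_map, length_seq in Hn.
  transitivity (nth n (map (fun t => nth t l false) (seq 0 k)) ((fun t => nth t l false) 0%nat)).
  apply nth_indep. rewrite length_map, length_seq; lia.
  rewrite (map_nth (fun t => nth t l false) (seq 0 k) 0%nat n), seq_nth by lia. reflexivity.
Qed.

Lemma block_app k a W : length a = k -> block k (app_inf a W) = bcons a (block k W).
Proof.
  intros Ha. apply functional_extensionality. intros [|j]; unfold block; simpl.
  - transitivity (map (fun t => nth t a false) (seq 0 k)); [|apply nth_seq_map; exact Ha].
    apply map_ext_in. intros t Ht.
    apply in_seq in Ht. unfold app_inf. rewrite Nat.mul_0_r. simpl.
    destruct (Nat.ltb_spec t (length a)). reflexivity. lia.
  - apply map_ext_in. intros t Ht. apply in_seq in Ht. unfold app_inf.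
    destruct (Nat.ltb_spec (k * S j + t) (length a)). nia. f_equal. nia.
Qed.

Lemma chunks_fuel k : (1 <= k)%nat -> forall f1 f2 w, (length w <= f1)%nat -> (length w <= f2)%nat ->
  chunks_aux f1 k w = chunks_aux f2 k w.
Proof.
  intros Hk f1. induction f1; intros f2 w H1 H2.
  - destruct w; simpl in *; [|lia]. destruct f2; reflexivity.
  - destruct w as [|x w']. destruct f2; reflexivity.
    destruct f2. simpl in H2. lia. simpl. f_equal. apply IHf1.
    all: rewrite length_skipn; change (length (x :: w')) with (S (length w')) in *; lia.
Qed.

Lemma sigma_fin_app k sigma a r : (1 <= k)%nat -> length a = k ->
  sigma_fin k sigma (a ++ r) = sigma a ++ sigma_fin k sigma r.
Proof.
  intros Hk Ha. unfold sigma_fin, chunks.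
  assert (E : chunks_aux (length (a ++ r)) k (a ++ r) =
     firstn k (a ++ r) :: chunks_aux (length (a ++ r) - 1) k (skipn k (a ++ r))).
  { destruct a as [|x a']. simpl in Ha. lia. simpl. rewrite Nat.sub_0_r. reflexivity. }
  rewrite E. rewrite firstn_app, skipn_app.
  rewrite firstn_all2 by lia. rewrite skipn_all2 by lia.
  rewrite Ha, Nat.sub_diag. simpl. rewrite app_nil_r. f_equal.
  f_equal. f_equal. apply chunks_fuel; [lia | rewrite length_app; lia | lia].
Qed.

Lemma app_inf_app u v W : app_inf (u ++ v) W = app_inf u (app_inf v W).
Proof.
  apply functional_extensionality. intros i. unfold app_inf. rewrite length_app.
  destruct (Nat.ltb_spec i (length u)).
  - destruct (Nat.ltb_spec i (length u + length v)); [|lia]. apply app_nth1. exact H.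
  - destruct (Nat.ltb_spec (i - length u) (length v)).
    + destruct (Nat.ltb_spec i (length u + length v)); [|lia]. apply app_nth2. exact H.
    + destruct (Nat.ltb_spec i (length u + length v)); [lia|]. f_equal. lia.
Qed.

Lemma app_inf_nil W : app_inf [] W = W.
Proof. apply functional_extensionality. intros i. unfold app_inf. simpl. f_equal. lia. Qed.

Lemma prefix_rel k sigma : (1 <= k)%nat -> forall L r W T, length r = (k * L)%nat ->
  Rel sigma (block k W) T -> Rel sigma (block k (app_inf r W)) (app_inf (sigma_fin k sigma r) T).
Proof.
  intros Hk L. induction L; intros r W T Hr HR.
  - rewrite Nat.mul_0_r in Hr. destruct r; [|simpl in Hr; lia].
    rewrite !app_inf_nil. exact HR.
  - rewrite <- (firstn_skipn k r).
    assert (Ha : length (firstn k r) = k) by (rewrite length_firstn; lia).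
    assert (Hr' : length (skipn k r) = (k * L)%nat) by (rewrite length_skipn; lia).
    rewrite sigma_fin_app by assumption. rewrite !app_inf_app.
    rewrite block_app by exact Ha. apply Rel_cons. apply IHL; assumption.
Qed.

Definition flatten k (B : nat -> list bool) : nat -> bool :=
  fun i => nth (i mod k)%nat (B (i / k)%nat) false.

Lemma divmod k j t : (t < k)%nat -> ((k * j + t) / k = j /\ (k * j + t) mod k = t)%nat.
Proof.
  intros H. split. symmetry; apply Nat.div_unique with t; lia.
  symmetry; apply Nat.mod_unique with j; lia.
Qed.

Lemma block_flatten k B : (forall j, length (B j) = k) -> forall j, block k (flatten k B) j = B j.
Proof.
  intros HB j. unfold block, flatten.
  transitivity (map (fun t => nth t (B j) false) (seq 0 k)); [|apply nth_seq_map; apply HB].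
  apply map_ext_in. intros t Ht. apply in_seq in Ht.
  destruct (divmod k j t) as [E1 E2]. lia. rewrite E1, E2. reflexivity.
Qed.

Definition ileave (b : nat -> list bool) (weps : list bool) : nat -> list bool :=
  fun j => if Nat.even j then b (Nat.div2 j) else weps.

Lemma ileave_even b weps j : ileave b weps (2 * j) = b j.
Proof. unfold ileave. rewrite Nat.even_even, Nat.div2_double. reflexivity. Qed.

Lemma ileave_odd b weps j : ileave b weps (2 * j + 1) = weps.
Proof. unfold ileave. rewrite Nat.even_odd. reflexivity. Qed.

Lemma pref_len_succ sigma b j : pref_len sigma b (S j) = (pref_len sigma b j + length (sigma (b j)))%nat.
Proof. reflexivity. Qed.

Lemma pref_ileave sigma b weps : sigma weps = [] -> forall j,
  pref_len sigma (ileave b weps) (2 * j) = pref_len sigma b j /\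
  pref_len sigma (ileave b weps) (2 * j + 1) = pref_len sigma b (S j).
Proof.
  intros Hw j. induction j as [|j [IH1 IH2]].
  - simpl. unfold ileave. simpl. split; reflexivity.
  - assert (E1 : pref_len sigma (ileave b weps) (2 * S j) = pref_len sigma b (S j)).
    { replace (2 * S j)%nat with (S (2 * j + 1)) by lia. rewrite pref_len_succ, IH2, ileave_odd, Hw.
      simpl. lia. }
    split. exact E1.
    replace (2 * S j + 1)%nat with (S (2 * S j)) by lia.
    rewrite pref_len_succ, E1, ileave_even. reflexivity.
Qed.

Lemma pref_ge sigma b : (forall i, sigma (b i) <> []) -> forall j, (j <= pref_len sigma b j)%nat.
Proof.
  intros H j. induction j. lia. rewrite pref_len_succ.
  specialize (H j). destruct (sigma (b j)). congruence. simpl. lia.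
Qed.

Lemma Rel_ileave sigma b weps R : sigma weps = [] -> (forall i, sigma (b i) <> []) ->
  (forall j m, (m < length (sigma (b j)))%nat -> R (pref_len sigma b j + m)%nat = nth m (sigma (b j)) false) ->
  Rel sigma (ileave b weps) R.
Proof.
  intros Hw Hne Hm. split.
  - intros i m Hlt. destruct (Nat.Even_or_Odd i) as [[j ->]|[j ->]].
    + rewrite (proj1 (pref_ileave sigma b weps Hw j)). rewrite ileave_even in *. apply Hm. exact Hlt.
    + rewrite ileave_odd, Hw in Hlt. simpl in Hlt. lia.
  - intros N. exists (2 * N)%nat. rewrite (proj1 (pref_ileave sigma b weps Hw N)).
    apply pref_ge. exact Hne.
Qed.

Lemma all_false_eq (l : list bool) k : length l = k -> (forall m, (m < k)%nat -> nth m l false = false) ->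
  l = repeat false k.
Proof.
  intros H Hf. apply nth_ext with false false. rewrite repeat_length. exact H.
  intros n Hn. rewrite nth_repeat. apply Hf. lia.
Qed.

Lemma ones_app r C : ones C -> ones (app_inf r C).
Proof.
  intros H N. destruct (H N) as [i [Hi Hc]]. exists (length r + i)%nat. split. lia.
  unfold app_inf. destruct (Nat.ltb_spec (length r + i) (length r)). lia.
  rewrite <- Hc. f_equal. lia.
Qed.

Lemma pre_lemma k sigma weps : (2 <= k)%nat -> erasing k sigma weps -> optimal k sigma ->
  forall r R, Nat.divide k (length r) ->
  exists C, ones (app_inf r C) /\ Rel sigma (block k (app_inf r C)) (app_inf (sigma_fin k sigma r) R).
Proof.
  intros Hk [Hwl [Hw Huniq]] Hopt r R [z Hz].
  destruct (Hopt R) as [b [Hb Hm]].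
  set (B := ileave b weps).
  assert (HBl : forall j, length (B j) = k).
  { intros j. unfold B, ileave. destruct (Nat.even j). apply Hb. exact Hwl. }
  exists (flatten k B). split.
  - apply ones_app. intros N.
    assert (Hne : b N <> weps).
    { intros E. apply (proj2 (Hb N)). rewrite E. exact Hw. }
    assert (Hex : exists m, (m < k)%nat /\ (nth m (b N) false = true \/ nth m weps false = true)).
    { apply NNPP. intros Hn. apply Hne.
      rewrite (all_false_eq (b N) k (proj1 (Hb N))), (all_false_eq weps k Hwl). reflexivity.
      - intros m Hm'. destruct (nth m weps false) eqn:E; [|reflexivity]. exfalso. apply Hn. eauto.
      - intros m Hm'. destruct (nth m (b N) false) eqn:E; [|reflexivity]. exfalso. apply Hn. eauto. }
    destruct Hex as [m [Hmk [H1|H1]]].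
    + exists (k * (2 * N) + m)%nat. split. nia. unfold flatten.
      destruct (divmod k (2 * N) m Hmk) as [E1 E2]. rewrite E1, E2. unfold B. rewrite ileave_even. exact H1.
    + exists (k * (2 * N + 1) + m)%nat. split. nia. unfold flatten.
      destruct (divmod k (2 * N + 1) m Hmk) as [E1 E2]. rewrite E1, E2. unfold B. rewrite ileave_odd. exact H1.
  - apply prefix_rel with z. lia. lia.
    assert (E : block k (flatten k B) = B).
    { apply functional_extensionality. apply block_flatten. exact HBl. }
    rewrite E. apply Rel_ileave; auto. intros i. apply Hb.
Qed.

Lemma block_periodic k weps j : length weps = k -> (1 <= k)%nat -> block k (periodic k weps) j = weps.
Proof.
  intros Hl Hk. unfold block, periodic.
  transitivity (map (fun t => nth t weps false) (seq 0 k)); [|apply nth_seq_map; exact Hl].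
  apply map_ext_in. intros t Ht. apply in_seq in Ht.
  destruct (divmod k j t) as [_ E2]. lia. rewrite E2. reflexivity.
Qed.

Lemma value_lemma k sigma weps W T : (2 <= k)%nat -> erasing k sigma weps -> ones W ->
  Rel sigma (block k W) T -> f_sigma k sigma weps (val_inf W) = val_inf T.
Proof.
  intros Hk [Hwl [Hw _]] Ho HR. unfold f_sigma.
  destruct (excluded_middle_informative _) as [H|H].
  - rewrite tilde_val by exact Ho. apply L_concat. exact HR.
  - exfalso. apply H. rewrite tilde_val by exact Ho. split.
    + destruct (Ho O) as [i [_ Hi]]. split. exact (val_pos i W Hi).
      apply (val_inf_props W).
    + intros E. rewrite E in HR. destruct HR as [_ Hu]. destruct (Hu 1%nat) as [j Hj].
      assert (pref_len sigma (block k (periodic k weps)) j = 0%nat).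
      { clear Hj. induction j. reflexivity. rewrite pref_len_succ, IHj, block_periodic; [|exact Hwl|lia].
        rewrite Hw. reflexivity. }
      lia.
Qed.

Lemma iter_add (f : R -> R) a b x : iter (a + b) f x = iter a f (iter b f x).
Proof. induction a; simpl. reflexivity. rewrite IHa. reflexivity. Qed.

Lemma iter_shift (f : R -> R) m x : iter (S m) f x = iter m f (f x).
Proof. replace (S m) with (m + 1)%nat by lia. apply iter_add. Qed.

Lemma f_I k sigma weps x : unit_interval (f_sigma k sigma weps x).
Proof.
  unfold f_sigma, unit_interval. destruct (excluded_middle_informative _).
  apply val_concat_bounds. lra.
Qed.

Lemma iter_I k sigma weps h x : unit_interval x -> unit_interval (iter h (f_sigma k sigma weps) x).
Proof. intros H. destruct h. exact H. simpl. apply f_I. Qed.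

Theorem mainTheorem16 (k : nat) (sigma : list bool -> list bool) (weps : list bool) :
  (2 <= k)%nat ->
  erasing k sigma weps ->
  strongly_erasing k sigma ->
  weps <> repeat true k ->
  optimal k sigma ->
  (forall w : list bool, exists h : nat,
     forall y, image_iter h (f_sigma k sigma weps) (cylinder w) y <-> unit_interval y) /\
  topologically_mixing (f_sigma k sigma weps).
Proof.
  intros Hk Her Hse _ Hopt.
  set (f := f_sigma k sigma weps).
  assert (Part1 : forall w : list bool, exists h : nat,
     forall y, image_iter h f (cylinder w) y <-> unit_interval y).
  { intros w. destruct (Hse w) as [n [r [Hn [Hr0 [Hrj Hlast]]]]]. exists n. intros y. split.
    - intros [x [Hx Hit]]. subst y. apply iter_I. apply Hx.
    - intros Hy. destruct (expansion y Hy) as [U HU].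
      assert (Hdiv : forall j, (j <= n - 1)%nat -> Nat.divide k (length (r j))).
      { intros [|j] Hj. apply Hr0. apply (Hrj (S j)). lia. }
      assert (Claim : forall m, (m <= n - 1)%nat -> exists C, ones (app_inf (r (n - 1 - m)%nat) C) /\
                  iter (S m) f (val_inf (app_inf (r (n - 1 - m)%nat) C)) = y).
      { induction m as [|m IH]; intros Hm.
        - rewrite Nat.sub_0_r.
          destruct (pre_lemma k sigma weps Hk Her Hopt (r (n - 1)%nat) U) as [C [Ho HR]].
          apply Hdiv. lia.
          exists C. split. exact Ho. simpl. unfold f.
          rewrite (value_lemma k sigma weps _ U Hk Her Ho). exact HU.
          rewrite Hlast, app_inf_nil in HR. exact HR.
        - destruct IH as [C' [Ho' Hit']]. lia.
          assert (Hround := Hrj (n - 1 - m)%nat ltac:(lia)).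
          replace (n - 1 - m - 1)%nat with (n - 1 - S m)%nat in Hround by lia.
          destruct Hround as [[v Hv] _].
          destruct (pre_lemma k sigma weps Hk Her Hopt (r (n - 1 - S m)%nat) (app_inf v C')) as [C [Ho HR]].
          apply Hdiv. lia.
          exists C. split. exact Ho. rewrite iter_shift. unfold f.
          rewrite (value_lemma k sigma weps _ _ Hk Her Ho HR).
          rewrite <- app_inf_app, <- Hv. exact Hit'. }
      destruct (Claim (n - 1)%nat (le_n _)) as [C [Ho Hit]].
      replace (n - 1 - (n - 1))%nat with 0%nat in * by lia.
      replace (S (n - 1)) with n in Hit by lia.
      destruct Hr0 as [[v0 Hv0] _].
      exists (val_inf (app_inf (r 0%nat) C)). split; [|exact Hit].
      split. apply (val_inf_props _).
      right. exists (app_inf v0 C). rewrite Hv0, app_inf_app. reflexivity. }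
  split. exact Part1.
  assert (Surj1 : forall y, unit_interval y -> exists z, unit_interval z /\ f z = y).
  { intros y Hy. destruct (expansion y Hy) as [U HU].
    destruct (pre_lemma k sigma weps Hk Her Hopt [] U) as [C [Ho HR]].
    exists 0%nat. reflexivity.
    exists (val_inf (app_inf [] C)). split. apply (val_inf_props _).
    unfold f. rewrite (value_lemma k sigma weps _ U Hk Her Ho). exact HU.
    change (sigma_fin k sigma []) with (@nil bool) in HR. rewrite (app_inf_nil U) in HR. exact HR. }
  assert (Surj : forall m y, unit_interval y -> exists z, unit_interval z /\ iter m f z = y).
  { induction m; intros y Hy. exists y. split; auto.
    destruct (IHm y Hy) as [z' [Hz' Hit]]. destruct (Surj1 z' Hz') as [z [Hz Hfz]].
    exists z. split. exact Hz. rewrite iter_shift, Hfz. exact Hit. }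
  intros A B [HAI HAo] [HBI HBo] [a Ha] [bb Hb].
  destruct (HAo a Ha) as [eps [He HA]].
  destruct (expansion a (HAI a Ha)) as [Ua HUa].
  destruct (half_pow_small eps He) as [L HL].
  set (w := map Ua (seq 0 L)).
  destruct (Part1 w) as [h Hh]. exists h. intros n Hn.
  destruct (Surj (n - h)%nat bb (HBI bb Hb)) as [z [Hz Hitz]].
  destruct (proj2 (Hh z) Hz) as [x [Hx Hitx]].
  exists x. split.
  - apply HA. apply Hx.
    assert (Hwl : length w = L) by (unfold w; rewrite length_map, length_seq; reflexivity).
    assert (Ha' : a = val_fin w + (/2)^L * val_inf (fun i => Ua (L + i)%nat)).
    { rewrite <- HUa. unfold w. rewrite val_fin_pre. apply val_inf_split. }
    destruct (val_inf_props (fun i => Ua (L + i)%nat)) as [_ [_ Hb1]].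
    assert (Hxw : exists t, 0 <= t <= 1 /\ x = val_fin w + (/2)^L * t).
    { destruct Hx as [_ [[v Hv]|[v Hv]]].
      - exists (val_fin v). split. pose proof (val_fin_bounds v). pose proof (half_pow_pos (length v)). lra.
        rewrite Hv, val_fin_app, Hwl. reflexivity.
      - exists (val_inf v). split. apply (val_inf_props v).
        rewrite Hv, val_inf_app, Hwl. reflexivity. }
    destruct Hxw as [t [Ht Hxt]].
    pose proof (half_pow_pos L).
    assert (0 <= (/2)^L * t <= (/2)^L).
    { split. apply Rmult_le_pos; lra. rewrite <- (Rmult_1_r ((/2)^L)) at 2. apply Rmult_le_compat_l; lra. }
    assert (0 <= (/2)^L * val_inf (fun i => Ua (L + i)%nat) <= (/2)^L).
    { split. apply Rmult_le_pos; lra. rewrite <- (Rmult_1_r ((/2)^L)) at 2. apply Rmult_le_compat_l; lra. }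
    apply Rabs_def1; lra.
  - replace n with ((n - h) + h)%nat by lia. rewrite iter_add. rewrite Hitx.
    fold f. rewrite Hitz. exact Hb.
Qed.
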